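(* Let $z\ge1$, $X\subset[\Delta]^d$ finite, and let $C\subseteq X$ be a constant-factor approximation to the optimal $(k,z)$-medoids clustering on $X$. For a point $x\in X$, let $u$ be a center of $C$ closest to $x$ (ties broken arbitrarily). Then for any center $c\in C\setminus\{u\}$, \[\min_{p\in C\cup\{x\}\setminus\{c\}}\|c-p\|_2^z\le\min_{p\in C\setminus\{c\}}\|c-p\|_2^z\le2^{z+1}\min_{p\in C\cup\{x\}\setminus\{c\}}\|c-p\|_2^z.\]
   Context: The $(k,z)$-medoids clustering problem on $X$ asks for a set $C\subseteq X$ with $|C|\le k$ minimizing $\sum_{y\in X}\min_{c\in C}\|y-c\|_2^z$. *)

(* Defs.v *)
From HB Require Import structures.
From mathcomp Require Import all_boot all_order all_algebra.
From mathcomp Require Import all_classical all_reals all_analysis.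
Set Implicit Arguments. Unset Strict Implicit. Unset Printing Implicit Defensive.
Import Order.TTheory GRing.Theory Num.Theory.
Local Open Scope ring_scope.

(* A point of the grid [Delta]^d = {1,...,Delta}^d: coordinate i is
   (p i : nat) + 1 where p i : 'I_Delta. *)
Definition grid (d Delta : nat) : finType := {ffun 'I_d -> 'I_Delta}.

Definition coord {R : realType} {d Delta : nat} (p : grid d Delta) (i : 'I_d) : R :=
  ((p i : nat).+1)%:R.

Definition dist2 {R : realType} {d Delta : nat} (p q : grid d Delta) : R :=
  Num.sqrt (\sum_(i < d) (coord p i - coord q i) ^+ 2).

Definition distz {R : realType} {d Delta : nat} (z : R) (p q : grid d Delta) : R :=
  (dist2 p q) `^ z.

(* min_{p in S} ||c - p||_2^z  (as an extended real; +oo for empty S) *)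
Definition mindistz {R : realType} {d Delta : nat} (z : R)
  (S : {set grid d Delta}) (c : grid d Delta) : \bar R :=
  \big[Order.min/+oo%E]_(p in S) (distz z c p)%:E.

Definition medoid_cost {R : realType} {d Delta : nat} (z : R)
  (X C : {set grid d Delta}) : \bar R :=
  (\sum_(y in X) mindistz z C y)%E.

Definition approx_medoids {R : realType} {d Delta : nat} (z alpha : R) (k : nat)
  (X C : {set grid d Delta}) : Prop :=
  C \subset X /\ (#|C| <= k)%N /\
  forall C' : {set grid d Delta}, C' \subset X -> (#|C'| <= k)%N ->
    (medoid_cost z X C <= alpha%:E * medoid_cost z X C')%E.

(* Main.v *)
Require Import Defs.
From HB Require Import structures.
From mathcomp Require Import all_boot all_order all_algebra.
From mathcomp Require Import all_classical all_reals all_analysis.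
From mathcomp Require Import ring lra.
Import Order.TTheory GRing.Theory Num.Theory.
Local Open Scope ring_scope.

Lemma CS_sum (R : realFieldType) n (a b : 'I_n -> R) :
  (\sum_i a i * b i) ^+ 2 <= (\sum_i a i ^+ 2) * (\sum_i b i ^+ 2).
Proof.
set X := \sum_i \sum_j (a i ^+ 2 * b j ^+ 2).
set Y := \sum_i \sum_j (a i * b i * (a j * b j)).
have H : 0 <= \sum_i \sum_j (a i * b j - a j * b i) ^+ 2.
  by apply: sumr_ge0 => i _; apply: sumr_ge0 => j _; apply: sqr_ge0.
have E : \sum_i \sum_j (a i * b j - a j * b i) ^+ 2 =
   X + \sum_i \sum_j (a j ^+ 2 * b i ^+ 2) - 2 * Y.
  rewrite /X /Y mulr_sumr -big_split -sumrB; apply: eq_bigr => i _.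
  rewrite mulr_sumr -big_split -sumrB; apply: eq_bigr => j _; rewrite /=; ring.
have EX2 : \sum_i \sum_j (a j ^+ 2 * b i ^+ 2) = X by rewrite exchange_big.
rewrite EX2 in E.
have EX : (\sum_i a i ^+ 2) * (\sum_i b i ^+ 2) = X.
  by rewrite /X mulr_suml; apply: eq_bigr => i _; rewrite mulr_sumr.
have EY : (\sum_i a i * b i) ^+ 2 = Y.
  by rewrite expr2 /Y mulr_suml; apply: eq_bigr => i _; rewrite mulr_sumr.
rewrite EX EY; lra.
Qed.

Lemma tri_sum (R : rcfType) n (a b : 'I_n -> R) :
  Num.sqrt (\sum_i (a i + b i) ^+ 2) <=
  Num.sqrt (\sum_i a i ^+ 2) + Num.sqrt (\sum_i b i ^+ 2).
Proof.
set A := \sum_i a i ^+ 2; set B := \sum_i b i ^+ 2; set S := \sum_i a i * b i.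
have A0 : 0 <= A by apply: sumr_ge0 => i _; apply: sqr_ge0.
have B0 : 0 <= B by apply: sumr_ge0 => i _; apply: sqr_ge0.
have hS : S <= Num.sqrt A * Num.sqrt B.
  rewrite -sqrtrM //; apply: le_trans (ler_norm S) _.
  rewrite -sqrtr_sqr; apply: ler_wsqrtr; exact: CS_sum.
have E : \sum_i (a i + b i) ^+ 2 = A + 2 * S + B.
  rewrite /A /S /B mulr_sumr -!big_split; apply: eq_bigr => i _ /=; ring.
rewrite E -(ger0_norm (addr_ge0 (sqrtr_ge0 A) (sqrtr_ge0 B))) -sqrtr_sqr.
apply: ler_wsqrtr; rewrite sqrrD !sqr_sqrtr //; lra.
Qed.

Lemma dist2_tri (R : realType) d Delta (p q r : grid d Delta) :
  dist2 p r <= dist2 p q + dist2 q r :> R.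
Proof.
have := @tri_sum R d (fun i => Defs.coord p i - Defs.coord q i : R) (fun i => Defs.coord q i - Defs.coord r i).
rewrite /dist2 (eq_bigr (fun i => (Defs.coord p i - Defs.coord r i : R) ^+ 2)) //.
by move=> i _; rewrite addrA subrK.
Qed.

Lemma dist2C (R : realType) d Delta (p q : grid d Delta) :
  dist2 p q = dist2 q p :> R.
Proof.
by rewrite /dist2; congr Num.sqrt; apply: eq_bigr => i _; rewrite -sqrrN opprB.
Qed.

Lemma dist2_ge0 (R : realType) d Delta (p q : grid d Delta) :
  0 <= dist2 p q :> R.
Proof. exact: sqrtr_ge0. Qed.

Theorem lemma3p7 (R : realType) (d Delta k : nat) (z alpha : R)
  (X C : {set grid d Delta}) (x u c : grid d Delta) :
  1 <= z -> 1 <= alpha ->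
  approx_medoids z alpha k X C ->
  x \in X ->
  u \in C -> (forall v, v \in C -> dist2 x u <= dist2 x v :> R) ->
  c \in C :\ u ->
  (mindistz z ((x |: C) :\ c) c <= mindistz z (C :\ c) c)%E /\
  (mindistz z (C :\ c) c <= (2 `^ (z + 1))%:E * mindistz z ((x |: C) :\ c) c)%E.
Proof.
move=> z1 _ _ _ uC umin.
rewrite in_setD1 => /andP[cu cC].
split.
  apply: le_bigmin => [|p]; first exact: leey.
  rewrite in_setD1 => /andP[pc pC].
  by apply: bigmin_le_cond; rewrite in_setD1 in_setU1 pc pC orbT.
have K1 : 1 <= 2 `^ (z + 1) :> R.
  have : 2 `^ 0 <= 2 `^ (z + 1) :> R by apply: ler_powR; lra.
  by rewrite powRr0.
have K0 : 0 < 2 `^ (z + 1) :> R by lra.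
set L := mindistz z (C :\ c) c.
have Lfin : forall p, p \in C :\ c -> (L <= (distz z c p)%:E)%E.
  by move=> p pin; apply: bigmin_le_cond.
rewrite /mindistz.
apply: (big_ind (fun y => L <= (2 `^ (z + 1))%:E * y)%E).
- by rewrite gt0_muley ?lte_fin // leey.
- move=> a b Ha Hb; rewrite minEle; by case: ifP.
move=> p; rewrite in_setD1 in_setU1 => /andP[pc /orP[/eqP->|pC]].
- apply: le_trans (Lfin u _) _; first by rewrite in_setD1 uC eq_sym cu.
  rewrite -EFinM lee_fin /distz.
  have h1 : dist2 c u <= 2 * dist2 c x :> R.
    apply: le_trans (@dist2_tri R _ _ c x u) _.
    have := umin c cC; rewrite (@dist2C R _ _ x c); lra.
  have z0 : 0 <= z by lra.
  apply: le_trans (ge0_ler_powR z0 _ _ h1) _.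
  + by rewrite nnegrE dist2_ge0.
  + by rewrite nnegrE mulr_ge0 ?dist2_ge0.
  rewrite powRM ?dist2_ge0 // powRD; last by rewrite pnatr_eq0 implybT.
  rewrite powRr1 // ler_wpM2r ?powR_ge0 //.
  by rewrite ler_peMr ?powR_ge0 // ler1n.
- apply: le_trans (Lfin p _) _; first by rewrite in_setD1 pc pC.
  by rewrite -EFinM lee_fin ler_peMl ?powR_ge0.
Qed.
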